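(* In a finite $(3+1)$-free poset $P$, every top of a tangle is matched to exactly one bottom of a tangle, and every bottom of a tangle is matched to exactly one top of a tangle. That is, the matching relation is a perfect matching between the tops of tangles and the bottoms of tangles of $P$.
   Context: A poset $P$ is $(3+1)$-free if there are no $a,b,c,d\in P$ with $a<b<c$ and $d$ incomparable to each of $a,b,c$. For $a\in P$ let $D_a=\{x\in P:x<a\}$, $U_a=\{x\in P:x>a\}$. Write $a\mathrel{\top}b$ if neither of $D_a,D_b$ contains the other, and $a\mathrel{\bot}b$ if neither of $U_a,U_b$ contains the other. A top of a tangle is a subset $A\subseteq P$ with $|A|\ge 2$ which is a connected component of the graph on vertex set $P$ whose edges are the pairs $\{a,b\}$ with $a\mathrel{\top}b$; a bottom of a tangle is a subset $B\subseteq P$ with $|B|\ge2$ which is a connected component of the analogous graph for $\bot$. A top of a tangle $A$ and a bottom of a tangle $B$ are matched if there exist distinct $a_1,a_2\in A$ and $b_1,b_2\in B$ with $b_1<a_1$, $b_2<a_2$, and each of the pairs $\{a_1,a_2\},\{b_1,b_2\},\{b_1,a_2\},\{b_2,a_1\}$ incomparable (an induced $(2+2)$ subposet with top vertices in $A$ and bottom vertices in $B$). *)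

(* Defs.v *)
From mathcomp Require Import all_boot.
Set Implicit Arguments. Unset Strict Implicit. Unset Printing Implicit Defensive.

Section Poset.
Variables (T : finType) (lt : rel T).

Definition is_strict_order : Prop :=
  (forall x, ~~ lt x x) /\ (forall x y z, lt x y -> lt y z -> lt x z).

Definition incomp (x y : T) : bool := ~~ lt x y && ~~ lt y x && (x != y).

Definition free31 : Prop :=
  ~ exists a b c d, [/\ lt a b, lt b c, incomp d a, incomp d b & incomp d c].

Definition down (a : T) : {set T} := [set x | lt x a].
Definition up (a : T) : {set T} := [set x | lt a x].

Definition topr : rel T := fun a b =>
  ~~ (down a \subset down b) && ~~ (down b \subset down a).
Definition botr : rel T := fun a b =>
  ~~ (up a \subset up b) && ~~ (up b \subset up a).

Definition component (e : rel T) (x : T) : {set T} := [set y | connect e x y].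

Definition is_top (A : {set T}) : Prop :=
  1 < #|A| /\ exists x, A = component topr x.
Definition is_bottom (B : {set T}) : Prop :=
  1 < #|B| /\ exists x, B = component botr x.

(* induced (2+2) with top vertices in A and bottom vertices in B *)
Definition matched (A B : {set T}) : Prop :=
  exists a1 a2 b1 b2,
    [/\ a1 \in A, a2 \in A, b1 \in B, b2 \in B &
     [/\ a1 != a2, b1 != b2, lt b1 a1, lt b2 a2 &
      [/\ incomp a1 a2, incomp b1 b2, incomp b1 a2 & incomp b2 a1]]].
End Poset.

(* Main.v *)
Require Import Defs.
From mathcomp Require Import all_boot.
Set Implicit Arguments. Unset Strict Implicit. Unset Printing Implicit Defensive.

Section S.
Variables (T : finType) (lt : rel T).
Hypothesis irr : forall x, ~~ lt x x.
Hypothesis tr : forall x y z, lt x y -> lt y z -> lt x z.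

Definition delta a b x := (lt x a && ~~ lt x b) || (lt x b && ~~ lt x a).

Lemma deltaC a b x : delta a b x = delta b a x.
Proof. by rewrite /delta orbC. Qed.

Lemma toprC a b : topr lt a b = topr lt b a.
Proof. by rewrite /topr andbC. Qed.

Lemma botrC : symmetric (botr lt).
Proof. by move=> a b; rewrite /botr andbC. Qed.

Lemma cbsym : connect_sym (botr lt).
Proof. exact: sym_connect_sym botrC. Qed.

Lemma topr_ex a b : topr lt a b -> exists2 x, lt x a & ~~ lt x b.
Proof. by case/andP => /subsetPn [x]; rewrite !inE => xa xb _; exists x. Qed.

Lemma botr_of x y a b : lt x a -> ~~ lt y a -> lt y b -> ~~ lt x b -> botr lt x y.
Proof.
move=> xa ya yb xb; apply/andP; split; apply/subsetPn; [exists a | exists b];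
  by rewrite !inE.
Qed.

Lemma L1 a b x y : topr lt a b -> delta a b x -> delta a b y ->
  connect (botr lt) x y.
Proof.
move=> tab.
have [x1 x1a x1b] := topr_ex tab.
have [y1 y1b y1a] := topr_ex (etrans (toprC b a) tab).
have H : forall w, delta a b w -> connect (botr lt) w x1.
  move=> w /orP [/andP [wa wb]|/andP [wb wa]].
    apply: (connect_trans (y := y1)); apply: connect1.
      exact: botr_of wa y1a y1b wb.
    exact: botr_of y1b x1b x1a y1a.
  apply: connect1; exact: botr_of wb x1b x1a wa.
move=> dx dy; apply: (connect_trans (H _ dx)).
by rewrite cbsym; apply: H.
Qed.

Lemma L2 a b c x y : topr lt a b -> topr lt b c -> delta a b x -> delta b c y ->
  connect (botr lt) x y.
Proof.
move=> tab tbc dx dy.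
have [x0 x0b x0a] := topr_ex (etrans (toprC b a) tab).
have [y0 y0b y0c] := topr_ex tbc.
case x0c: (lt x0 c).
  case y0a: (lt y0 a).
    apply: (connect_trans (y := x0)).
      apply: (L1 tab dx); by rewrite /delta x0b x0a orbT.
    apply: (connect_trans (y := y0)).
      apply: connect1; apply: (botr_of (a := c) (b := a)) => //; by rewrite y0a.
    apply: (L1 tbc _ dy); by rewrite /delta y0b y0c.
  apply: (connect_trans (y := y0)).
    apply: (L1 tab dx); by rewrite /delta y0b y0a orbT.
  apply: (L1 tbc _ dy); by rewrite /delta y0b y0c.
apply: (connect_trans (y := x0)).
  apply: (L1 tab dx); by rewrite /delta x0b x0a orbT.
apply: (L1 tbc _ dy); by rewrite /delta x0b x0c.
Qed.

Lemma delta_ex a b : topr lt a b -> exists w, delta a b w.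
Proof. by move=> /topr_ex [w wa wb]; exists w; rewrite /delta wa wb. Qed.

Lemma Lpath u v u1 v1 x y : connect (topr lt) u v -> topr lt u u1 ->
  topr lt v v1 -> delta u u1 x -> delta v v1 y -> connect (botr lt) x y.
Proof.
case/connectP => p.
elim: p u u1 x => [|z p IH] u u1 x /=.
  move=> _ -> tu tv dx dy.
  apply: (L2 (a := u1) (b := u) (c := v1)) => //; first by rewrite toprC.
  by rewrite deltaC.
case/andP => uz pz ev tu tv dx dy.
have [w dw] := delta_ex uz.
apply: (connect_trans (y := w)).
  apply: (L2 (a := u1) (b := u) (c := z)) => //; first by rewrite toprC.
  by rewrite deltaC.
apply: (IH z u w pz ev) => //; first by rewrite toprC.
by rewrite deltaC.
Qed.

Lemma topr_nlt a b : topr lt a b -> ~~ lt a b.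
Proof.
case/andP => /subsetPn [x]; rewrite !inE => xa xb _.
apply/negP => ab; by rewrite (tr xa ab) in xb.
Qed.

Lemma topr_neq a b : topr lt a b -> a != b.
Proof. by apply: contraTneq => ->; rewrite /topr subxx. Qed.

Lemma matched_of (A B : {set T}) a b x y : a \in A -> b \in A -> x \in B -> y \in B ->
  topr lt a b -> lt x a -> ~~ lt x b -> lt y b -> ~~ lt y a -> matched lt A B.
Proof.
move=> aA bA xB yB tab xa xb yb ya.
have tba : topr lt b a by rewrite toprC.
have xy : x != y by apply: contraNneq xb => ->.
exists a, b, x, y; split => //; split => //.
  by apply: topr_neq.
split.
- by rewrite /incomp topr_nlt // topr_nlt // topr_neq.
- rewrite /incomp xy andbT; apply/andP; split; apply/negP => h.
    by rewrite (tr h yb) in xb.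
  by rewrite (tr h xa) in ya.
- rewrite /incomp xb /=; apply/andP; split.
    apply/negP => h; move: (topr_nlt tba); by rewrite (tr h xa).
  by apply/eqP => e; move: (topr_nlt tba); rewrite -e xa.
- rewrite /incomp ya /=; apply/andP; split.
    apply/negP => h; move: (topr_nlt tab); by rewrite (tr h yb).
  by apply/eqP => e; move: (topr_nlt tab); rewrite -e yb.
Qed.

Lemma comp_eq x y : connect (botr lt) x y ->
  component (botr lt) x = component (botr lt) y.
Proof. by move=> xy; apply/setP => z; rewrite !inE (same_connect cbsym xy). Qed.

Lemma part1 A : is_top lt A -> exists B : {set T}, [/\ is_bottom lt B, matched lt A B &
       forall B', is_bottom lt B' -> matched lt A B' -> B' = B].
Proof.
case=> hA [x0 defA].
have [z x0z] : exists z, topr lt x0 z.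
  case: (pickP (fun y => (y \in A) && (y != x0))) => [y /andP [yA ny]|none].
    move: yA; rewrite defA inE; case/connectP => [[|z p]] /=.
      by move=> _ ey; rewrite ey eqxx in ny.
    by case/andP => xz _ _; exists z.
  exfalso.
  have: A \subset [set x0].
    apply/subsetP => y yA; rewrite inE; move: (none y); rewrite yA /=.
    by move/negbFE.
  by move/subset_leq_card; rewrite cards1 leqNgt hA.
have [b1 b1x0 b1z] := topr_ex x0z.
have [b2 b2z b2x0] := topr_ex (etrans (toprC z x0) x0z).
have b12 : botr lt b1 b2 by apply: (botr_of b1x0 b2x0 b2z b1z).
exists (component (botr lt) b1); split.
- split; last by exists b1.
  apply/card_gt1P; exists b1, b2; rewrite !inE connect0 connect1 //; split => //.
  by apply: contraNneq b1z => ->.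
- apply: (matched_of (a := x0) (b := z) (x := b1) (y := b2)) => //.
  + by rewrite defA inE connect0.
  + by rewrite defA inE connect1.
  + by rewrite inE connect0.
  + by rewrite inE connect1.
- move=> B' [_ [c ->]] [a1 [a2 [c1 [c2 [a1A a2A c1B c2B
    [na c12 c1a1 c2a2 [ia12 ic12 ic1a2 ic2a1]]]]]]].
  have t12 : topr lt a1 a2.
    apply/andP; split; apply/subsetPn; [exists c1 | exists c2]; rewrite !inE //.
      by move: ic1a2; rewrite /incomp; case/andP => /andP [].
    by move: ic2a1; rewrite /incomp; case/andP => /andP [].
  have d1 : delta a1 a2 c1.
    by move: ic1a2; rewrite /delta c1a1 /incomp; case/andP => /andP [-> _ _].
  have := Lpath (u := x0) (u1 := z) (x := b1) (y := c1); rewrite defA inE in a1A.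
  move=> /(_ a1 a2 a1A x0z t12); rewrite /delta b1x0 b1z => /(_ isT d1) h.
  rewrite inE in c1B; apply: comp_eq.
  apply: (connect_trans c1B); by rewrite cbsym.
Qed.

End S.

Lemma incompC (T : finType) (lt : rel T) x y : incomp lt x y = incomp lt y x.
Proof. by rewrite /incomp eq_sym; case: (lt x y); case: (lt y x). Qed.

Lemma incomp_flip (T : finType) (lt : rel T) x y :
  incomp (fun u v => lt v u) x y = incomp lt x y.
Proof. by rewrite /incomp; case: (lt x y); case: (lt y x). Qed.

Lemma matched_flip (T : finType) (lt : rel T) (A B : {set T}) :
  matched lt B A -> matched (fun u v => lt v u) A B.
Proof.
move=> [a1 [a2 [b1 [b2 [a1B a2B b1A b2A [na nb l1 l2 [i12 j12 i1 i2]]]]]]].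
exists b1, b2, a1, a2; split => //; split => //; split;
  rewrite incomp_flip //; by rewrite incompC.
Qed.

Theorem proposition2p7 (T : finType) (lt : rel T) :
  is_strict_order lt -> free31 lt ->
  (forall A : {set T}, is_top lt A ->
     exists B : {set T}, [/\ is_bottom lt B, matched lt A B &
       forall B', is_bottom lt B' -> matched lt A B' -> B' = B]) /\
  (forall B : {set T}, is_bottom lt B ->
     exists A : {set T}, [/\ is_top lt A, matched lt A B &
       forall A', is_top lt A' -> matched lt A' B -> A' = A]).
Proof.
case=> irr tr _; split; first exact: part1.
move=> B hB.
have tr' : forall x y z, (fun u v => lt v u) x y -> (fun u v => lt v u) y z ->
  (fun u v => lt v u) x z by move=> x y z /= h1 h2; exact: tr h2 h1.
have [A [hA mA uA]] := @part1 T (fun u v => lt v u) tr' B hB.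
exists A; split => //.
  exact: (matched_flip (lt := fun u v => lt v u) mA).
move=> A' hA' mA'; apply: uA => //.
exact: matched_flip.
Qed.
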